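(* Let $n,t\ge1$. Let $\nu$ be the distribution of the random diagonal unitary $U=\exp\!\big(\mathrm i\theta\bigotimes_{j=1}^nZ^{a_j}\big)$ where $a\in\{0,1\}^n$ is uniform and $\theta$ is uniform on $(0,2\pi]$, independently, and let $\nu_q$ be defined identically except that $\theta$ is uniform on $\{2\pi l/q\}_{l=0}^{q-1}$. Then $g_D(\nu,t)\le 1-\frac{1}{2t}$, and if $q>2t$ then also $g_D(\nu_q,t)\le1-\frac1{2t}$.
   Context: $Z^0=I$, $Z^1=Z$. $\mu_D$ denotes the Haar measure on diagonal $2^n\times2^n$ unitaries (independent uniform phases on the diagonal entries). For a distribution $\nu$ on diagonal unitaries, $g_D(\nu,t)=\big\|\mathbb E_{U\sim\nu}U^{\otimes t}\otimes\overline U^{\otimes t}-\mathbb E_{U\sim\mu_D}U^{\otimes t}\otimes\overline U^{\otimes t}\big\|_\infty$ (operator norm), where $\overline U$ is the entrywise complex conjugate. *)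

(* Defs.v *)
From HB Require Import structures.
From mathcomp Require Import all_boot all_order all_algebra.
From mathcomp Require Import complex.
From mathcomp Require Import all_classical all_reals all_analysis.
Set Implicit Arguments. Unset Strict Implicit. Unset Printing Implicit Defensive.
Import Order.TTheory GRing.Theory Num.Theory.
Local Open Scope ring_scope.
Local Open Scope complex_scope.
Local Open Scope classical_set_scope.

Definition qbasis (n : nat) := {ffun 'I_n -> bool}.

Definition cmat (R : realType) (I : finType) := I -> I -> R[i].

Definition expi (R : realType) (phi : R) : R[i] := (cos phi) +i* (sin phi).

Definition cabs2 (R : realType) (z : R[i]) : R := (@complex.Re R z) ^+ 2 + (@complex.Im R z) ^+ 2.
Definition vnorm (R : realType) (I : finType) (v : I -> R[i]) : R :=
  Num.sqrt (\sum_(i : I) cabs2 (v i)).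

Definition mapply (R : realType) (I : finType) (A : cmat R I) (v : I -> R[i]) :
  I -> R[i] := fun i => \sum_(j : I) A i j * v j.

Definition opnorm (R : realType) (I : finType) (A : cmat R I) : R :=
  sup [set vnorm (mapply A v) | v in [set v : I -> R[i] | vnorm v <= 1]].

Definition diagm (R : realType) (I : finType) (d : I -> R[i]) : cmat R I :=
  fun i j => if i == j then d i else 0.

Definition conjm (R : realType) (I : finType) (A : cmat R I) : cmat R I :=
  fun i j => ((A i j)^*)%C.

Definition tensm (R : realType) (I J : finType) (A : cmat R I) (B : cmat R J) :
  cmat R (I * J)%type := fun p q => A p.1 q.1 * B p.2 q.2.

Definition tpow (R : realType) (I : finType) (t : nat) (A : cmat R I) :
  cmat R {ffun 'I_t -> I} := fun i j => \prod_(k < t) A (i k) (j k).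

Definition moment (R : realType) (I : finType) (t : nat) (A : cmat R I) :=
  tensm (@tpow R I t A) (@tpow R I t (conjm A)).

Definition rscale (R : realType) (r : R) (z : R[i]) : R[i] := (r * @complex.Re R z) +i* (r * @complex.Im R z).

Definition avg_cont (R : realType) (g : R -> R[i]) : R[i] :=
  rscale (2 * pi)^-1
    ((Rintegral lebesgue_measure `]0, 2 * pi] (fun th => @complex.Re R (g th))) +i*
     (Rintegral lebesgue_measure `]0, 2 * pi] (fun th => @complex.Im R (g th)))).

Definition avg_disc (R : realType) (q : nat) (g : R -> R[i]) : R[i] :=
  rscale (q%:R)^-1 (\sum_(l < q) g (2 * pi * l%:R / q%:R)).

(* A distribution on diagonal unitaries on n qubits is represented by its
   expectation functional F |-> E_{U ~ nu} F(U). *)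
Definition distr_diag (R : realType) (n : nat) :=
  (cmat R (qbasis n) -> R[i]) -> R[i].

(* Z^{a} = (x)_j Z^{a_j}: diagonal entry at x is prod_j (-1)^{a_j x_j} *)
Definition zsign (R : realType) (n : nat) (a x : qbasis n) : R :=
  \prod_(j < n) (if a j && x j then -1 else 1).

(* exp(i theta Z^a): exponential of a diagonal matrix, computed entrywise *)
Definition Uexp (R : realType) (n : nat) (a : qbasis n) (th : R) : cmat R (qbasis n) :=
  diagm (fun x => expi (th * zsign R a x)).

Definition nu_cont (R : realType) (n : nat) : distr_diag R n :=
  fun F => rscale ((2 ^ n)%N)%:R^-1 (\sum_(a : qbasis n) avg_cont (fun th => F (Uexp a th))).

Definition nu_disc (R : realType) (n q : nat) : distr_diag R n :=
  fun F => rscale ((2 ^ n)%N)%:R^-1 (\sum_(a : qbasis n) avg_disc q (fun th => F (Uexp a th))).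

Fixpoint iter_avg (R : realType) (X : finType) (s : seq X)
    (F : (X -> R) -> R[i]) (phi : X -> R) : R[i] :=
  match s with
  | [::] => F phi
  | x :: s' => avg_cont (fun th => iter_avg s' F (fun y => if y == x then th else phi y))
  end.

(* Haar measure mu_D on diagonal unitaries: independent uniform phases on all
   2^n diagonal entries *)
Definition haar_diag (R : realType) (n : nat) : distr_diag R n :=
  fun F => iter_avg (enum (qbasis n))
             (fun phi => F (diagm (fun x => expi (phi x)))) (fun _ => 0).

Definition moment_op (R : realType) (n t : nat) (nu : distr_diag R n) :=
  fun i j => nu (fun U => @moment R _ t U i j).

Definition gD (R : realType) (n : nat) (nu : distr_diag R n) (t : nat) : R :=
  opnorm (fun i j => @moment_op R n t nu i j - @moment_op R n t (@haar_diag R n) i j).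

(* Main.v *)
Require Import Defs.
From HB Require Import structures.
From mathcomp Require Import all_boot all_order all_algebra.
From mathcomp Require Import complex.
From mathcomp Require Import all_classical all_reals all_analysis.
From mathcomp Require Import ring lra.
Import numFieldNormedType.Exports.
Import Order.TTheory GRing.Theory Num.Theory.
Local Open Scope ring_scope.


Section Integ.
Variable R : realType.
Notation mu := (@lebesgue_measure R).

Lemma lin_derive (k x : R) : is_derive x 1 (fun y : R => k * y) k.
Proof.
have := @is_deriveZ R R R id k x 1 1 (is_derive_id _ _).
by rewrite /GRing.scale /= mulr1.
Qed.

Lemma trig_derive (m a b x : R) : m != 0 ->
  is_derive x 1 (fun x => m^-1 * (a * sin (m * x) + b * cos (m * x)))
     (a * cos (m * x) - b * sin (m * x)).
Proof.
move=> m0.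
have hs : is_derive x 1 (fun y : R => sin (m * y)) (cos (m * x) * m).
  exact: (@is_derive1_comp _ sin (fun y => m * y) x _ _ _ (lin_derive m x)).
have hc : is_derive x 1 (fun y : R => cos (m * y)) (- sin (m * x) * m).
  exact: (@is_derive1_comp _ cos (fun y => m * y) x _ _ _ (lin_derive m x)).
have := is_deriveZ m^-1 (is_deriveD (is_deriveZ a hs) (is_deriveZ b hc)).
move=> h.
have -> : (fun x0 : R => m^-1 * (a * sin (m * x0) + b * cos (m * x0))) =
  (m^-1 \*: (a \*: (fun y : R => sin (m * y)) + b \*: (fun y : R => cos (m * y)))).
  by apply: funext => y.
apply: (is_derive_eq h).
rewrite /GRing.scale /=. by field.
Qed.

Lemma is_derive_cont (f : R -> R) (x df : R) : is_derive x 1 f df -> continuous_at x f.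
Proof.
move=> h; apply: differentiable_continuous; apply/derivable1_diffP; by case: h.
Qed.

Lemma trig_cont (m a b : R) : continuous (fun x => a * cos (m * x) - b * sin (m * x)).
Proof.
have [->|m0] := eqVneq m 0.
  under eq_fun do rewrite mul0r cos0 sin0.
  move=> x; exact: cvg_cst.
move=> x.
have := trig_derive m (-b * m) (a * m) x m0.
have -> : (fun x => m^-1 * (- b * m * sin (m * x) + a * m * cos (m * x))) =
   (fun x => a * cos (m * x) - b * sin (m * x)).
  by apply: funext => y; field.
exact: is_derive_cont.
Qed.

Lemma trig_2pi_nat (k : nat) : cos (k%:R * (2 * pi)) = 1 :> R /\ sin (k%:R * (2 * pi)) = 0 :> R.
Proof.
elim: k => [|k [IHc IHs]]; first by rewrite mul0r cos0 sin0.
have -> : (k.+1%:R * (2 * pi) = k%:R * (2 * pi) + pi *+ 2 :> R).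
  by rewrite -addn1 natrD mulrDl mul1r -mulr_natl mulr2n mulrDl mul1r.
by rewrite cosD2pi sinD2pi.
Qed.

Lemma trig_2pi (k : int) : cos (k%:~R * (2 * pi)) = 1 :> R /\ sin (k%:~R * (2 * pi)) = 0 :> R.
Proof.
case: k => k; first exact: trig_2pi_nat.
rewrite NegzE intrN mulNr cosN sinN.
have [-> ->] := trig_2pi_nat k.+1; by rewrite oppr0.
Qed.

Lemma trig_FTC (k : int) (a b : R) : k != 0 ->
  \int[mu]_(x in `]0, 2 * pi]) (a * cos (k%:~R * x) - b * sin (k%:~R * x)) = 0.
Proof.
move=> k0.
set m : R := k%:~R.
have m0 : m != 0 by rewrite intr_eq0.
have pi0 : (0 < 2 * pi :> R) by rewrite mulr_gt0 // pi_gt0.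
have cf := trig_cont m a b.
have ic : mu.-integrable `[0, 2 * pi] (EFin \o (fun x => a * cos (m * x) - b * sin (m * x))).
  apply: continuous_compact_integrable; first exact: segment_compact.
  by apply: continuous_subspaceT.
rewrite Rintegral_itv_obnd_cbnd; last first.
  apply: integrableS ic => //; exact: subset_itv_oc_cc.
rewrite /Rintegral (@continuous_FTC2 _ _ (fun x => m^-1 * (a * sin (m * x) + b * cos (m * x)))) //.
- have [c s] := trig_2pi k.
  rewrite -EFinB /= /m c s !mulr0 sin0 cos0.
  by rewrite mulr0 add0r subrr.
- by apply: continuous_subspaceT => x; apply: cf.
- have dF := fun x => trig_derive m a b x m0.
  split.
  + by move=> x _; case: (dF x).
  + by apply: cvg_at_right_filter; apply: is_derive_cont (dF 0).
  + by apply: cvg_at_left_filter; apply: is_derive_cont (dF (2 * pi)).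
- move=> x _; rewrite derive1E; by case: (trig_derive m a b x m0) => _ ->.
Qed.

Lemma mu_02pi : fine (mu `]0, 2 * pi]) = 2 * pi :> R.
Proof.
have pi0 : (0 < 2 * pi :> R) by rewrite mulr_gt0 // pi_gt0.
by rewrite lebesgue_measure_itv /= lte_fin pi0 /= subr0.
Qed.

Lemma cst_int (c : R) : \int[mu]_(x in `]0, 2 * pi]) c = c * (2 * pi).
Proof. by rewrite Rintegral_cst // mu_02pi. Qed.

Lemma avg_expi (K : R[i]) (k : int) :
  avg_cont (fun th => K * expi (k%:~R * th)) = if k == 0 then K else 0.
Proof.
have pi0 : (0 < 2 * pi :> R) by rewrite mulr_gt0 // pi_gt0.
case: K => a b; rewrite /avg_cont /expi /=.
have -> : (fun th : R => a * cos (k%:~R * th) - b * sin (k%:~R * th)) =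
   (fun th : R => a * cos (k%:~R * th) - b * sin (k%:~R * th)) by [].
have -> : (fun th : R => a * sin (k%:~R * th) + b * cos (k%:~R * th)) =
   (fun th : R => b * cos (k%:~R * th) - (- a) * sin (k%:~R * th)).
  by apply: funext => th; rewrite mulNr opprK addrC.
have [k0|k0] := eqVneq k 0.
  have kR : (k%:~R : R) = 0 by apply/eqP; rewrite intr_eq0 k0.
  rewrite kR.
  have E : forall c d : R, (fun th : R => c * cos (0 * th) - d * sin (0 * th)) = (fun _ => c).
    by move=> c d; apply: funext => th; rewrite mul0r cos0 sin0 mulr1 mulr0 subr0.
  rewrite !E.
  rewrite !cst_int /rscale /=.
  by congr (_ +i* _)%C; rewrite mulrCA mulVf ?mulr1 // gt_eqF.
rewrite !trig_FTC // /rscale /= mulr0.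
by [].
Qed.
End Integ.


Section Cplx.
Variable R : realType.

Lemma expiD (x y : R) : expi (x + y) = expi x * expi y.
Proof. by rewrite /expi cosD sinD /=; congr (_ +i* _)%C; ring. Qed.

Lemma expi0 : expi (0 : R) = 1.
Proof. by rewrite /expi cos0 sin0. Qed.

Lemma expiX (x : R) (l : nat) : expi x ^+ l = expi (l%:R * x).
Proof.
elim: l => [|l IH]; first by rewrite expr0 mul0r expi0.
by rewrite exprS IH -expiD -{1}(mul1r x) -mulrDl -natr1 addrC.
Qed.

Lemma rscaleE (r : R) (z : R[i]) : rscale r z = (r%:C)%C * z.
Proof. by case: z => a b; rewrite /rscale /=; congr (_ +i* _)%C; ring. Qed.

Lemma conj_expi (x : R) : ((expi x)^*)%C = expi (- x).
Proof. by rewrite /expi cosN sinN. Qed.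


Lemma sin_ne0 (y : R) : 0 < `|y| < pi -> sin y != 0.
Proof.
case/andP => y0 ypi.
have [yp|yn] := ltP 0 y.
  by rewrite gt_eqF // sin_gt0_pi // yp -(gtr0_norm yp).
have yl : y < 0 by rewrite lt_neqAle yn andbT; apply: contraTneq y0 => ->; rewrite normr0 ltxx.
by rewrite -oppr_eq0 -sinN gt_eqF // sin_gt0_pi // -(ltr0_norm yl) y0 ypi.
Qed.

Lemma expi_ne1 (x : R) : 0 < `|x| < 2 * pi -> expi x != 1.
Proof.
case/andP => x0 x2.
apply/negP => /eqP e.
have c1 : cos x = 1 by move: e; rewrite /expi => -[].
have hx : x = x / 2 + x / 2 by rewrite -splitr.
have s0 : sin (x / 2) ^+ 2 = 0.
  move: c1; rewrite {1}hx cosD -!expr2 cos2sin2 => h.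
  have : 2 * sin (x / 2) ^+ 2 = 0 by lra.
  by move/eqP; rewrite mulf_eq0 pnatr_eq0 /= => /eqP.
have : sin (x / 2) != 0.
  apply: sin_ne0.
  rewrite normrM (ger0_norm (x := 2^-1)) ?invr_ge0 ?ler0n //.
  apply/andP; split; first by rewrite mulr_gt0 // invr_gt0 ltr0n.
  by rewrite ltr_pdivrMr ?ltr0n // mulrC.
by move=> /negP; apply; move/eqP: s0; rewrite expf_eq0.
Qed.

Lemma avg_disc_expi (K : R[i]) (k : int) (q : nat) : (0 < q)%N -> (`|k| < q)%N ->
  avg_disc q (fun th => K * expi (k%:~R * th)) = if k == 0 then K else 0.
Proof.
move=> q0 kq.
have qR : (q%:R : R) != 0 by rewrite pnatr_eq0 -lt0n.
set z := @expi R (2 * pi * k%:~R / q%:R).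
have E : forall l : 'I_q, expi (k%:~R * (2 * pi * l%:R / q%:R)) = z ^+ l.
  move=> l; rewrite /z expiX; congr expi; by field.
rewrite /avg_disc rscaleE.
under eq_bigr do rewrite E.
rewrite -mulr_sumr.
have [k0|k0] := eqVneq k 0.
  have -> : z = 1 by rewrite /z k0 mulr0z mulr0 mul0r expi0.
  under eq_bigr do rewrite expr1n.
  rewrite sumr_const card_ord mulrCA.
  by rewrite -(rmorph_nat (real_complex R)) -rmorphM mulVf // mulr1.
suff -> : \sum_(i < q) z ^+ i = 0 by rewrite !mulr0.
have z1 : z - 1 != 0.
  rewrite subr_eq0 /z; apply: expi_ne1.
  have pi0 : (0 < 2 * pi :> R) by rewrite mulr_gt0 // pi_gt0.
  have kn : (0 < `|k|)%N by rewrite absz_gt0.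
  rewrite -mulrA normrM (gtr0_norm pi0) normrM normfV (gtr0_norm (x := q%:R)) ?ltr0n //.
  rewrite -intr_norm -natr_absz.
  apply/andP; split.
    by rewrite mulr_gt0 // divr_gt0 // ltr0n.
  rewrite -[ltRHS]mulr1 ltr_pM2l // ltr_pdivrMr ?ltr0n // mul1r ltr_nat //.
have zq : z ^+ q - 1 = 0.
  rewrite /z expiX.
  have -> : q%:R * (2 * pi * k%:~R / q%:R) = k%:~R * (2 * pi) :> R by field.
  have [c s] := trig_2pi R k.
  by rewrite /expi c s subrr.
move: zq; rewrite subrX1 => /eqP; rewrite mulf_eq0 (negbTE z1) /= => /eqP //.
Qed.

End Cplx.

Set Implicit Arguments. Unset Strict Implicit. Unset Printing Implicit Defensive.


Definition zsi (n : nat) (a x : qbasis n) : int :=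
  \prod_(j < n) (if a j && x j then -1 else 1).

Lemma card_qbasis n : #|qbasis n| = (2 ^ n)%N.
Proof. by rewrite card_ffun card_bool card_ord. Qed.

Lemma zsi_norm n (a x : qbasis n) : `|zsi a x| = 1.
Proof.
rewrite /zsi normr_prod; apply: big1 => j _; by case: ifP => _; rewrite ?normrN normr1.
Qed.

Lemma zsi_orth n (x y : qbasis n) :
  \sum_(a : qbasis n) zsi a x * zsi a y = if x == y then 2 ^+ n else 0.
Proof.
rewrite /zsi.
under eq_bigr do rewrite -big_split /=.
rewrite -(bigA_distr_bigA (fun (j : 'I_n) (b : bool) =>
   (if b && x j then -1 else 1) * (if b && y j then -1 else 1) : int)).
under eq_bigr do rewrite big_bool /=.
have [<-|xy] := eqVneq x y.
  rewrite (eq_bigr (fun _ => 2)); first by rewrite prodr_const card_ord.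
  by move=> j _; case: (x j); rewrite ?mulrNN !mulr1.
have [j hj] : exists j, x j != y j.
  apply/existsP; apply: contraNT xy; rewrite negb_exists => /forallP h.
  by apply/eqP/ffunP => j; apply/eqP; move: (h j); rewrite negbK.
rewrite (bigD1 j) //=.
by move: hj; case: (x j); case: (y j) => //= _; rewrite mulr1 ?mulrN ?mulNr mulr1 ?addNr ?addrN mul0r.
Qed.

Lemma comb n (c : qbasis n -> int) (x0 : qbasis n) (T : int) : c x0 != 0 ->
  (forall a, `|\sum_x zsi a x * c x| <= T) ->
  (\sum_(a : qbasis n) ((\sum_x zsi a x * c x == 0)%:R : int)) * T + 2 ^+ n <= 2 ^+ n * T.
Proof.
move=> cx0 fT.
set f := fun a => \sum_x zsi a x * c x.
have A : \sum_a f a * zsi a x0 = 2 ^+ n * c x0.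
  rewrite /f; under eq_bigr do rewrite mulr_suml.
  rewrite exchange_big /=.
  under eq_bigr do (under eq_bigr do rewrite mulrAC; rewrite -mulr_suml zsi_orth).
  rewrite (bigD1 x0) //= eqxx big1 ?addr0 // => x /negbTE ->; by rewrite mul0r.
have B : 2 ^+ n <= 2 ^+ n * `|c x0|.
  rewrite -{1}[2 ^+ n]mulr1 ler_pM2l ?exprn_gt0 //.
  by rewrite -gtz0_ge1 normr_gt0.
have C : 2 ^+ n * `|c x0| <= \sum_a `|f a|.
  have -> : (2 ^+ n : int) = `|2 ^+ n| by rewrite ger0_norm // exprn_ge0.
  rewrite -normrM -A.
  apply: le_trans (ler_norm_sum _ _ _) _.
  by apply: ler_sum => a _; rewrite normrM zsi_norm mulr1.
have D : \sum_a `|f a| <= \sum_(a : qbasis n) T * (1 - (f a == 0)%:R).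
  apply: ler_sum => a _; have [->|fa] := eqVneq (f a) 0.
    by rewrite normr0 subrr mulr0.
  by rewrite subr0 mulr1; apply: fT.
have E : \sum_(a : qbasis n) T * (1 - (f a == 0)%:R) =
   T * (2 ^+ n - \sum_a ((f a == 0)%:R : int)).
  rewrite -mulr_sumr sumrB sumr_const card_qbasis.
  by rewrite natrX.
have := le_trans B (le_trans C D); rewrite E.
set N := \sum_a _.
move=> h.
have -> : N * T + 2 ^+ n = 2 ^+ n + T * N by ring.
have -> : (2 ^+ n * T = T * (2 ^+ n - N) + T * N) by ring.
by rewrite lerD2r.
Qed.


Section Mom.
Variable R : realType.

Lemma tpow_diag (I : finType) (t : nat) (d : I -> R[i]) (i j : {ffun 'I_t -> I}) :
  @tpow R I t (diagm d) i j = if i == j then \prod_k d (i k) else 0.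
Proof.
rewrite /tpow /diagm; have [<-|ij] := eqVneq i j.
  by apply: eq_bigr => k _; rewrite eqxx.
have [k hk] : exists k, i k != j k.
  apply/existsP; apply: contraNT ij; rewrite negb_exists => /forallP h.
  by apply/eqP/ffunP => k; apply/eqP; move: (h k); rewrite negbK.
by rewrite (bigD1 k) //= (negbTE hk) mul0r.
Qed.

Lemma conjm_diag (I : finType) (d : I -> R[i]) :
  conjm (diagm d) = diagm (fun x => ((d x)^*)%C).
Proof.
apply: funext => i; apply: funext => j; rewrite /conjm /diagm.
by case: ifP => //= _; rewrite /= oppr0.
Qed.

Lemma prod_expi (I : Type) (r : seq I) (f : I -> R) :
  \prod_(k <- r) expi (f k) = expi (\sum_(k <- r) f k).
Proof. by rewrite (big_morph _ (@expiD R) (@expi0 R)). Qed.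

Lemma moment_expi (I : finType) (t : nat) (phi : I -> R) (p q : {ffun 'I_t -> I} * {ffun 'I_t -> I}) :
  @moment R I t (diagm (fun x => expi (phi x))) p q =
  (p == q)%:R * expi (\sum_k phi (p.1 k) - \sum_k phi (p.2 k)).
Proof.
rewrite /moment /tensm conjm_diag !tpow_diag.
case: p q => [p1 p2] [q1 q2] /=.
rewrite xpair_eqE.
have [e1|h1] := eqVneq p1 q1; have [e2|h2] := eqVneq p2 q2;
  rewrite ?e1 ?e2 ?eqxx ?(negbTE h1) ?(negbTE h2) /= ?mul0r ?mulr0 //.
rewrite mul1r -?e1 -?e2.
have ce : forall y : R, (cos y -i* sin y)%C = expi (- y) by move=> y; rewrite /expi cosN sinN.
under [X in _ * X]eq_bigr do rewrite ce.
by rewrite !prod_expi -expiD sumrN.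
Qed.


Definition cnt (I : finType) (t : nat) (i : {ffun 'I_t -> I}) (x : I) : nat :=
  (\sum_(k < t) (i k == x))%N.

Lemma sum_part (V : zmodType) (I : finType) (t : nat) (i : {ffun 'I_t -> I}) (g : I -> V) :
  \sum_k g (i k) = \sum_x g x *+ cnt i x.
Proof.
rewrite /cnt; under [RHS]eq_bigr do rewrite -sumrMnr.
rewrite exchange_big /=; apply: eq_bigr => k _.
rewrite (bigD1 (i k)) //= eqxx mulr1n big1 ?addr0 // => x.
by rewrite eq_sym => /negbTE ->.
Qed.

Definition cc (I : finType) (t : nat) (p : {ffun 'I_t -> I} * {ffun 'I_t -> I}) (x : I) : int :=
  (cnt p.1 x)%:Z - (cnt p.2 x)%:Z.

Lemma S_part (I : finType) (t : nat) (p : {ffun 'I_t -> I} * {ffun 'I_t -> I}) (phi : I -> R) :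
  \sum_k phi (p.1 k) - \sum_k phi (p.2 k) = \sum_x (cc p x)%:~R * phi x.
Proof.
rewrite !sum_part -sumrB; apply: eq_bigr => x _.
by rewrite /cc intrB mulrBl -!pmulrn !mulr_natl.
Qed.

Lemma iter_avg_expi (X : finType) (s : seq X) (c : X -> int) (K : R[i]) (phi : X -> R) :
  uniq s ->
  iter_avg s (fun psi => K * expi (\sum_x (c x)%:~R * psi x)) phi =
  (if all (fun x => c x == 0) s then K else 0) *
    expi (\sum_(x | x \notin s) (c x)%:~R * phi x).
Proof.
elim: s phi => [|x0 s IH] phi /=.
  by [].
case/andP => x0s us.
have -> : (fun th => iter_avg s (fun psi => K * expi (\sum_x (c x)%:~R * psi x))
                (fun y => if y == x0 then th else phi y)) =
  (fun th => ((if all (fun x => c x == 0) s then K else 0) *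
     expi (\sum_(x | (x \notin s) && (x != x0)) (c x)%:~R * phi x)) * expi ((c x0)%:~R * th)).
  apply: funext => th; rewrite IH //.
  rewrite (bigD1 x0) //= eqxx expiD [expi (_ * th) * _]mulrC mulrA; congr (_ * expi _ * _).
  apply: eq_bigr => x /andP[_ /negbTE ->] //.
rewrite avg_expi.
have -> : \sum_(x | x \notin x0 :: s) (c x)%:~R * phi x =
   \sum_(x | (x \notin s) && (x != x0)) (c x)%:~R * phi x.
  by apply: eq_bigl => x; rewrite in_cons negb_or andbC.
by case: (c x0 == 0) => //=; rewrite mul0r.
Qed.


Lemma haar_entry (n t : nat) (p q : {ffun 'I_t -> qbasis n} * {ffun 'I_t -> qbasis n}) :
  @moment_op R n t (@haar_diag R n) p q =
  (p == q)%:R * (if all (fun x => cc p x == 0) (enum (qbasis n)) then 1 else 0).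
Proof.
rewrite /moment_op /haar_diag.
have -> : (fun phi : qbasis n -> R => @moment R _ t (diagm (fun x => expi (phi x))) p q) =
  (fun phi => (p == q)%:R * expi (\sum_x (cc p x)%:~R * phi x)).
  by apply: funext => phi; rewrite moment_expi S_part.
rewrite iter_avg_expi ?enum_uniq // big_pred0 ?expi0 ?mulr1; last by move=> x; rewrite mem_enum.
by case: all; rewrite ?mulr1 ?mulr0.
Qed.

Lemma zsignE (n : nat) (a x : qbasis n) : zsign R a x = (zsi a x)%:~R.
Proof.
rewrite /zsign /zsi; apply: (big_ind2 (fun (u : R) (v : int) => u = v%:~R)) => //.
  by move=> u1 v1 u2 v2 -> ->; rewrite intrM.
by move=> j _; case: ifP.
Qed.

Definition fi (n t : nat) (a : qbasis n) (p : {ffun 'I_t -> qbasis n} * {ffun 'I_t -> qbasis n}) : int :=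
  \sum_x zsi a x * cc p x.

Lemma Uexp_entry (n t : nat) (a : qbasis n) (th : R) (p q : {ffun 'I_t -> qbasis n} * {ffun 'I_t -> qbasis n}) :
  @moment R _ t (Uexp a th) p q = (p == q)%:R * expi ((fi a p)%:~R * th).
Proof.
rewrite /Uexp moment_expi (S_part p (fun x => th * zsign R a x)); congr (_ * expi _).
rewrite /fi rmorph_sum mulr_suml; apply: eq_bigr => x _.
by rewrite /= zsignE intrM; ring.
Qed.


Lemma sum_if_K (T : finType) (P : pred T) (K : R[i]) :
  \sum_(a : T) (if P a then K else 0) = K * ((\sum_(a : T) ((P a)%:R : R))%:C)%C.
Proof.
rewrite rmorph_sum mulr_sumr; apply: eq_bigr => a _.
by case: (P a); rewrite /= ?mulr1 ?mulr0.
Qed.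

Definition Nz (n t : nat) (p : {ffun 'I_t -> qbasis n} * {ffun 'I_t -> qbasis n}) : R :=
  \sum_(a : qbasis n) ((fi a p == 0)%:R : R).

Lemma nu_cont_entry (n t : nat) (p q : {ffun 'I_t -> qbasis n} * {ffun 'I_t -> qbasis n}) :
  @moment_op R n t (@nu_cont R n) p q = (p == q)%:R * ((Nz p / ((2 ^ n)%N)%:R)%:C)%C.
Proof.
rewrite /moment_op /nu_cont.
have E : forall a, avg_cont (fun th => @moment R _ t (Uexp a th) p q) =
   if fi a p == 0 then (p == q)%:R else 0.
  move=> a; rewrite -avg_expi; congr avg_cont; apply: funext => th; exact: Uexp_entry.
under eq_bigr do rewrite E.
rewrite rscaleE sum_if_K /Nz rmorphM /=; ring.
Qed.

Lemma nu_disc_entry (n t q0 : nat) (p q : {ffun 'I_t -> qbasis n} * {ffun 'I_t -> qbasis n}) :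
  (0 < q0)%N -> (forall a, `|fi a p| < q0)%N ->
  @moment_op R n t (@nu_disc R n q0) p q = (p == q)%:R * ((Nz p / ((2 ^ n)%N)%:R)%:C)%C.
Proof.
move=> q00 hq.
rewrite /moment_op /nu_disc.
have E : forall a, avg_disc q0 (fun th => @moment R _ t (Uexp a th) p q) =
   if fi a p == 0 then (p == q)%:R else 0.
  move=> a; rewrite -(@avg_disc_expi R _ _ _ q00 (hq a)); congr avg_disc; apply: funext => th; exact: Uexp_entry.
under eq_bigr do rewrite E.
rewrite rscaleE sum_if_K /Nz rmorphM /=; ring.
Qed.

End Mom.


Section Op.
Variable R : realType.

Lemma cabs2_ge0 (z : R[i]) : 0 <= cabs2 z.
Proof. by rewrite /cabs2 addr_ge0 // sqr_ge0. Qed.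

Lemma cabs2_scale (r : R) (z : R[i]) : cabs2 ((r%:C)%C * z) = r ^+ 2 * cabs2 z.
Proof. by case: z => a b; rewrite /cabs2 /=; ring. Qed.

Lemma opnorm_diag (I : finType) (D : cmat R I) (e : I -> R) (M : R) :
  0 <= M -> (forall i, 0 <= e i <= M) ->
  (forall i j, D i j = (i == j)%:R * ((e i)%:C)%C) -> opnorm D <= M.
Proof.
move=> M0 he hD.
rewrite /opnorm; apply: ge_sup.
  exists (vnorm (mapply D (fun _ => 0))), (fun _ => 0) => //.
  rewrite /= /vnorm (eq_bigr (fun _ => 0)) ?big1 // ?sqrtr0 //.
  by move=> i _; rewrite /cabs2 /= expr0n /= addr0.
move=> y [v /= hv <-].
have Ev : forall i, mapply D v i = ((e i)%:C)%C * v i.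
  move=> i; rewrite /mapply (bigD1 i) //= hD eqxx mul1r big1 ?addr0 //.
  by move=> j /negbTE ji; rewrite hD eq_sym ji mul0r mul0r.
rewrite /vnorm (eq_bigr (fun i => e i ^+ 2 * cabs2 (v i))); last by move=> i _; rewrite Ev cabs2_scale.
apply: le_trans (_ : Num.sqrt (M ^+ 2 * \sum_i cabs2 (v i)) <= M).
  rewrite ler_sqrt; last by rewrite mulr_ge0 ?sqr_ge0 // sumr_ge0 // => i _; exact: cabs2_ge0.
  rewrite mulr_sumr; apply: ler_sum => i _; apply: ler_wpM2r; first exact: cabs2_ge0.
  by have /andP[e0 eM] := he i; rewrite ler_sqr // ?nnegrE.
rewrite sqrtrM ?sqr_ge0 // sqrtr_sqr ger0_norm //.
by rewrite -{2}[M]mulr1 ler_wpM2l.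
Qed.

End Op.


Section Fin.
Variable R : realType.

Lemma fi_alt (n t : nat) (a : qbasis n) (p : {ffun 'I_t -> qbasis n} * {ffun 'I_t -> qbasis n}) :
  fi a p = \sum_k zsi a (p.1 k) - \sum_k zsi a (p.2 k).
Proof.
rewrite !sum_part -sumrB /fi; apply: eq_bigr => x _.
by rewrite /cc mulrBr !pmulrn !mulrzz.
Qed.

Lemma fi_bound (n t : nat) (a : qbasis n) (p : {ffun 'I_t -> qbasis n} * {ffun 'I_t -> qbasis n}) :
  `|fi a p| <= (2 * t)%N%:Z.
Proof.
rewrite fi_alt; apply: le_trans (ler_normB _ _) _.
have h : forall i : {ffun 'I_t -> qbasis n}, `|\sum_k zsi a (i k)| <= t%:Z.
  move=> i; apply: le_trans (ler_norm_sum _ _ _) _.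
  rewrite (eq_bigr (fun _ => 1)); last by move=> k _; rewrite zsi_norm.
  by rewrite sumr_const card_ord natz.
apply: le_trans (lerD (h p.1) (h p.2)) _.
by rewrite mul2n -addnn PoszD.
Qed.


Lemma e_bound (n t : nat) (p : {ffun 'I_t -> qbasis n} * {ffun 'I_t -> qbasis n}) :
  (1 <= t)%N ->
  0 <= Nz R p / ((2 ^ n)%N)%:R - (if all (fun x => cc p x == 0) (enum (qbasis n)) then 1 else 0)
    <= 1 - (2 * t%:R)^-1.
Proof.
move=> t1.
have P0 : (0 : R) < ((2 ^ n)%N)%:R by rewrite ltr0n expn_gt0.
have T0 : (0 : R) < 2 * t%:R by rewrite mulr_gt0 // ltr0n.
have M0 : (0 : R) <= 1 - (2 * t%:R)^-1.
  rewrite subr_ge0 invf_le1 //.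
  by rewrite -natrM ler1n muln_gt0.
case: ifP => hall.
  have fi0 : forall a, fi a p = 0.
    move=> a; rewrite /fi big1 // => x _.
    by move/allP: hall => /(_ x (mem_enum _ x)) /eqP ->; rewrite mulr0.
  have -> : Nz R p = ((2 ^ n)%N)%:R.
    by rewrite /Nz (eq_bigr (fun _ => 1)) ?sumr_const ?card_qbasis // => a _; rewrite fi0 eqxx.
  by rewrite divff ?gt_eqF // subrr lexx.
move/negbT/allPn: hall => [x0 _ hx0].
have := comb hx0 (T := (2 * t)%N%:Z) (fun a => fi_bound a p).
rewrite -(ler_int R) intrD !intrM rmorph_sum rmorphXn /= -!pmulrn.
have -> : \sum_a ((\sum_x zsi a x * cc p x == 0)%:R : int)%:~R = Nz R p.
  by rewrite /Nz; apply: eq_bigr => a _; rewrite /fi; case: eqP.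
rewrite subr0 natrM addn1 -natrX => key.
have N0 : 0 <= Nz R p by rewrite /Nz sumr_ge0 // => a _; rewrite ler0n.
apply/andP; split; first by rewrite divr_ge0 // ltW.
rewrite ler_pdivrMr // -(ler_pM2r T0).
have -> : (1 - (2 * t%:R)^-1) * ((2 ^ n)%N)%:R * (2 * t%:R) =
   ((2 ^ n)%N)%:R * (2 * t%:R) - ((2 ^ n)%N)%:R :> R.
  by rewrite mulrAC mulrBl mul1r mulVf ?gt_eqF // mulrBl mul1r mulrC.
move: key.
set P := ((2 ^ n)%N)%:R; set T := 2 * t%:R.
lra.
Qed.


Lemma diff_entry (n t : nat) (nu : distr_diag R n)
  (hnu : forall p q : {ffun 'I_t -> qbasis n} * {ffun 'I_t -> qbasis n},
     @moment_op R n t nu p q = (p == q)%:R * ((Nz R p / ((2 ^ n)%N)%:R)%:C)%C) :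
  forall p q, @moment_op R n t nu p q - @moment_op R n t (@haar_diag R n) p q =
   (p == q)%:R * ((Nz R p / ((2 ^ n)%N)%:R -
     (if all (fun x => cc p x == 0) (enum (qbasis n)) then 1 else 0))%:C)%C.
Proof.
move=> p q; rewrite hnu haar_entry rmorphB /= -mulrBr; congr (_ * (_ - _)).
by case: all; rewrite ?rmorph1 ?rmorph0.
Qed.

Lemma gD_bound (n t : nat) (nu : distr_diag R n) :
  (1 <= t)%N ->
  (forall p q : {ffun 'I_t -> qbasis n} * {ffun 'I_t -> qbasis n},
     @moment_op R n t nu p q = (p == q)%:R * ((Nz R p / ((2 ^ n)%N)%:R)%:C)%C) ->
  gD nu t <= 1 - (2 * t%:R)^-1.
Proof.
move=> t1 hnu; rewrite /gD.
apply: (opnorm_diag (e := fun p => Nz R p / ((2 ^ n)%N)%:R -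
     (if all (fun x => cc p x == 0) (enum (qbasis n)) then 1 else 0))).
- have T0 : (0 : R) < 2 * t%:R by rewrite mulr_gt0 // ltr0n.
  rewrite subr_ge0 invf_le1 //.
  by rewrite -natrM ler1n muln_gt0.
- by move=> p; exact: e_bound.
- exact: diff_entry.
Qed.

End Fin.

Unset Implicit Arguments.
Theorem mainTheorem5 (R : realType) (n t : nat) :
  (1 <= n)%N -> (1 <= t)%N ->
  gD (@nu_cont R n) t <= 1 - (2 * t%:R)^-1 /\
  (forall q : nat, (2 * t < q)%N -> gD (@nu_disc R n q) t <= 1 - (2 * t%:R)^-1).
Proof.
move=> n1 t1; split.
  by apply: gD_bound => // p q; exact: nu_cont_entry.
move=> q tq; apply: gD_bound => // p q'.
apply: nu_disc_entry; first by apply: leq_ltn_trans tq.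
move=> a; have := fi_bound a p; rewrite -abszE lez_nat => h.
exact: leq_ltn_trans h tq.
Qed.
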